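(* Consider the decoding setting fixed in the context. Let $t_j=|\mathcal{A}_j|$ and run the index-collision-resolution procedure with $\hat t_j=t_j$, which terminates after $\tau$ iterations. Assume that (no $E_1$) $t_j\le T$, and that (no $E_2$) whenever, during this run, the decoder $D$ of $\mathcal{C}$ is applied to a vector of the form $[\mathbf{c}+\tilde{\mathbf{z}}_j/2^{\ell}]\bmod 2$ with $\mathbf{c}\in\mathcal{C}$ and $\ell$ a nonnegative integer, it outputs $\mathbf{c}$. Then for every $\ell\ge1$ (with $\ell\le\tau$), $\mathcal{U}(\mathcal{A}^{(\ell)}_j)=\bigcup_{\ell'=\ell}^{\tau}\mathcal{L}^{(\ell')}$.
   Context: Codes. Let $\mathbf{H}\in\{0,1\}^{m_p\times n_p}$ be a parity-check matrix of a binary linear code $\mathcal{C}_{\mathrm{aux}}$ of length $n_p$ with minimum Hamming distance $d$, and let $T=\lfloor (d-1)/2\rfloor$; denote the $u$-th column of $\mathbf{H}$ by $\mathbf{h}_u$. Let $\mathbf{G}\in\{0,1\}^{m_p\times n}$ be a generator matrix (full row rank) of a binary linear code $\mathcal{C}$ of length $n$ and dimension $m_p$. For $u\in\{1,\dots,n_p\}$ put $\mathbf{c}(u)=\mathbf{h}_u^T\mathbf{G}\bmod 2$ and define $\mathbf{x}(u)\in\mathbb{R}^n$ componentwise by $\mathbf{x}(u)_k=2a(\mathbf{c}(u)_k-1/2)$, where $a>0$ is fixed. Channel. In sub-block $j$, a finite set $\mathcal{A}_j$ of users transmits; user $i\in\mathcal{A}_j$ chose $u_i\in\{1,\dots,n_p\}$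 and sends $\mathbf{x}_{i,j}=\mathbf{x}(u_i)$. The received vector is $\mathbf{y}_j=\sum_{i\in\mathcal{A}_j}\mathbf{x}(u_i)+\mathbf{z}_j$ with noise $\mathbf{z}_j\in\mathbb{R}^n$; put $\tilde{\mathbf{z}}_j=\mathbf{z}_j/(2a)$. ''$\bmod 2$'' on real vectors is componentwise reduction into $[0,2)$. Basic decoder $\Phi$. For $\mathbf{y}\in\mathbb{R}^n$ and integer $\hat t\ge0$: form $\tilde{\mathbf{y}}=[\mathbf{y}/(2a)+\hat t/2]\bmod 2$; apply a decoder $D$ for $\mathcal{C}$, obtaining $\tilde{\mathbf{c}}\in\mathcal{C}$ (or a flagged error); recover the unique $\tilde{\mathbf{h}}$ with $\tilde{\mathbf{h}}^T\mathbf{G}=\tilde{\mathbf{c}}\bmod 2$; apply the bounded-distance syndrome decoder of $\mathcal{C}_{\mathrm{aux}}$, which returns the unique $S\subseteq\{1,\dots,n_p\}$ with $|S|\le T$ and $\sum_{u\in S}\mathbf{h}_u=\tilde{\mathbf{h}}\bmod 2$ if it exists and flags an error otherwise. $\Phi(\mathbf{y},\hat t)$ is the returned set (or $\emptyset$ with a flagged error). ICR procedure for an estimate $\hat t_j$: $\mathbf{y}^{(1)}_j=\mathbf{y}_j$, $\hat t^{(1)}_j=\hat t_j$, $\mathcal{L}^{(1)}=\Phi(\mathbf{y}^{(1)}_j,\hat t^{(1)}_j)$. For $\ell\ge1$: if $|\mathcal{L}^{(\ell)}|=\hat t^{(\ell)}_j$, stop with $\tau=\ell$ and return $\mathcal{L}^{(1)},\dots,\mathcal{L}^{(\tau)}$;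 if $|\mathcal{L}^{(\ell)}|>\hat t^{(\ell)}_j$, return an error; if $|\mathcal{L}^{(\ell)}|<\hat t^{(\ell)}_j$, set $\hat t^{(\ell+1)}_j=(\hat t^{(\ell)}_j-|\mathcal{L}^{(\ell)}|)/2$ (error if not an integer), $\mathbf{y}^{(\ell+1)}_j=(\mathbf{y}^{(\ell)}_j-\sum_{u\in\mathcal{L}^{(\ell)}}\mathbf{x}(u))/2$, $\mathcal{L}^{(\ell+1)}=\Phi(\mathbf{y}^{(\ell+1)}_j,\hat t^{(\ell+1)}_j)$, and continue. Auxiliary sets. For $u\in\{1,\dots,n_p\}$ let $\mathcal{A}^{(1)}_j(u)=\{i\in\mathcal{A}_j:u_i=u\}$. For $\ell\ge1$, let $\mathcal{B}^{(\ell)}_j(u)\subseteq\mathcal{A}^{(\ell)}_j(u)$ be an (arbitrary) subset with $|\mathcal{B}^{(\ell)}_j(u)|=2\lfloor|\mathcal{A}^{(\ell)}_j(u)|/2\rfloor$, and $\mathcal{A}^{(\ell+1)}_j(u)\subseteq\mathcal{B}^{(\ell)}_j(u)$ an (arbitrary) subset with $|\mathcal{A}^{(\ell+1)}_j(u)|=|\mathcal{B}^{(\ell)}_j(u)|/2$. Put $\mathcal{A}^{(\ell)}_j=\bigcup_u\mathcal{A}^{(\ell)}_j(u)$, $\mathcal{B}^{(\ell)}_j=\bigcup_u\mathcal{B}^{(\ell)}_j(u)$. For a set $\mathcal{S}$ of users, $\mathcal{U}(\mathcal{S})=\{u_i:i\in\mathcal{S}\}$. *)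

(* Defs.v *)
From HB Require Import structures.
From mathcomp Require Import all_boot all_order all_algebra.
From mathcomp Require Import reals.
Set Implicit Arguments. Unset Strict Implicit. Unset Printing Implicit Defensive.
Import Order.TTheory GRing.Theory Num.Theory.
Local Open Scope ring_scope.

Section Defs.
Variables (R : realType) (mp np n : nat).
Variables (H : 'M['F_2]_(mp, np)) (G : 'M['F_2]_(mp, n)).

Definition wt (m : nat) (v : 'cV['F_2]_m) : nat := #|[set i | v i 0 != 0]|.

Definition min_dist (d : nat) : Prop :=
  (exists v : 'cV['F_2]_np, [/\ v != 0, H *m v = 0 & wt v = d]) /\
  (forall v : 'cV['F_2]_np, v != 0 -> H *m v = 0 -> (d <= wt v)%N).

Definition bitR (b : 'F_2) : R := (b != 0)%:R.
Definition binR (c : 'rV['F_2]_n) : 'rV[R]_n := map_mx bitR c.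

Definition cw (u : 'I_np) : 'rV['F_2]_n := (col u H)^T *m G.

Definition xsig (a : R) (u : 'I_np) : 'rV[R]_n :=
  map_mx (fun b => 2 * a * (bitR b - 2^-1)) (cw u).

Definition mod2 (r : R) : R := r - 2 * (Num.floor (r / 2))%:~R.
Definition mod2v (v : 'rV[R]_n) : 'rV[R]_n := map_mx mod2 v.

(* bounded-distance syndrome decoder of C_aux: some (the unique, under the
   minimum-distance hypothesis) S with |S| <= T and sum_{u in S} h_u = h,
   or the empty set (error flagged) if none exists. *)
Definition synd_dec (T : nat) (h : 'cV['F_2]_mp) : {set 'I_np} :=
  odflt set0 [pick S : {set 'I_np} | (#|S| <= T)%N && (\sum_(u in S) col u H == h)].

Definition Phi_input (a : R) (y : 'rV[R]_n) (t : nat) : 'rV[R]_n :=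
  mod2v ((2 * a)^-1 *: y + const_mx (t%:R / 2)).

Definition Phi (a : R) (D : 'rV[R]_n -> option 'rV['F_2]_n) (T : nat)
  (y : 'rV[R]_n) (t : nat) : {set 'I_np} :=
  match D (Phi_input a y t) with
  | None => set0
  | Some c => synd_dec T (c *m pinvmx G)^T
  end.


(* ICR states (y^(l), t^(l)) for levels l >= 1 (level 0 = level 1, unused) *)
Fixpoint icr_state (a : R) (D : 'rV[R]_n -> option 'rV['F_2]_n) (T : nat)
  (y0 : 'rV[R]_n) (t0 : nat) (l : nat) : 'rV[R]_n * nat :=
  match l with
  | 0 => (y0, t0)
  | l'.+1 =>
    match l' with
    | 0 => (y0, t0)
    | _ => let st := icr_state a D T y0 t0 l' in
           let L := Phi a D T st.1 st.2 in
           (2^-1 *: (st.1 - \sum_(u in L) xsig a u), ((st.2 - #|L|) ./2)%N)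
    end
  end.

Definition icr_y a D T y0 t0 l := (icr_state a D T y0 t0 l).1.
Definition icr_t a D T y0 t0 l := (icr_state a D T y0 t0 l).2.
Definition icr_L a D T y0 t0 l :=
  Phi a D T (icr_y a D T y0 t0 l) (icr_t a D T y0 t0 l).

Definition icr_stops a D T y0 t0 (tau : nat) : Prop :=
  [/\ (1 <= tau)%N,
      forall l, (1 <= l < tau)%N ->
        (#|icr_L a D T y0 t0 l| < icr_t a D T y0 t0 l)%N /\
        ~~ odd (icr_t a D T y0 t0 l - #|icr_L a D T y0 t0 l|) &
      #|icr_L a D T y0 t0 tau| = icr_t a D T y0 t0 tau].

End Defs.

(* Main.v *)
From HB Require Import structures.
From mathcomp Require Import all_boot all_order all_algebra.
From mathcomp Require Import reals.
From mathcomp Require Import ring lra zify.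
Require Import Defs.
Import Order.TTheory GRing.Theory Num.Theory.
Local Open Scope ring_scope.
Set Implicit Arguments. Unset Strict Implicit. Unset Printing Implicit Defensive.

Lemma F2opp (x : 'F_2) : - x = x.
Proof. by case: x => [[|[|]]] //= ?; apply/val_inj. Qed.

Lemma bitRE (R : realType) (b : 'F_2) : bitR R b = (nat_of_ord b)%:R.
Proof. rewrite /bitR. by case: b => [[|[|k]] //]. Qed.

Lemma F2natE (k : nat) : ((k%:R : 'F_2) : nat) = (k %% 2)%N.
Proof. by rewrite (@val_Fp_nat 2). Qed.

Lemma F2natodd (k : nat) : (k%:R : 'F_2) = (odd k)%:R.
Proof. by rewrite -(@Fp_nat_mod 2) // modn2. Qed.

Lemma mod2_shift (R : realType) (r : R) (N : nat) : mod2 (r + 2 * N%:R) = mod2 r.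
Proof.
rewrite /mod2.
have -> : (r + 2 * N%:R) / 2 = r / 2 + N%:R by field.
rewrite floorDrz ?natr_int // intrD (floorK (natr_int _ N)).
ring.
Qed.

Lemma sum_bit (R : realType) (I : finType) (m : I -> nat) (b : I -> 'F_2) :
  \sum_i (m i)%:R * bitR R (b i) =
  bitR R (\sum_i (m i)%:R * b i) + 2 * ((\sum_i (m i * b i)) %/ 2)%N%:R.
Proof.
have -> : \sum_i (m i)%:R * b i = (\sum_i (m i * b i))%N%:R :> 'F_2.
  rewrite natr_sum; apply: eq_bigr => i _. by rewrite natrM natr_Zp.
rewrite bitRE F2natE.
have -> : \sum_i (m i)%:R * bitR R (b i) = (\sum_i (m i * b i))%N%:R.
  rewrite natr_sum; apply: eq_bigr => i _. by rewrite bitRE natrM.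
set N := (\sum_i _)%N.
by rewrite {1}(divn_eq N 2) natrD natrM addrC mulrC.
Qed.

Lemma mem_bigcup_seq (T : finType) (r : seq nat) (F : nat -> {set T}) x :
  (x \in \bigcup_(i <- r) F i) = has (fun i => x \in F i) r.
Proof.
elim: r => [|i r IH]; first by rewrite big_nil inE.
by rewrite big_cons in_setU IH.
Qed.

Lemma card_odd (I : finType) (m : I -> nat) :
  #|[set v | odd (m v)]| = (\sum_v odd (m v))%N.
Proof.
rewrite -sum1dep_card big_mkcond /=. apply: eq_bigr => v _. by case: (odd (m v)).
Qed.

Section Main.
Variables (R : realType) (mp np n : nat).
Variables (H : 'M['F_2]_(mp, np)) (G : 'M['F_2]_(mp, n)).

Definition cvec (m : 'I_np -> nat) : 'cV['F_2]_mp := \sum_v (m v)%:R *: col v H.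

Lemma cvec_cw (m : 'I_np -> nat) :
  \sum_v (m v)%:R *: cw H G v = (cvec m)^T *m G.
Proof.
rewrite /cvec linear_sum /= mulmx_suml; apply: eq_bigr => v _.
by rewrite linearZ /= scalemxAl.
Qed.

Lemma cvec_odd (m : 'I_np -> nat) : cvec m = \sum_(v in [set v | odd (m v)]) col v H.
Proof.
rewrite /cvec [RHS]big_mkcond /=; apply: eq_bigr => v _.
rewrite F2natodd inE; case: (odd (m v)); by rewrite ?scale1r ?scale0r.
Qed.

Lemma synd_unique (d : nat) (Hd : min_dist H d) (S1 S2 : {set 'I_np}) :
  (#|S1| <= (d - 1)./2)%N -> (#|S2| <= (d - 1)./2)%N ->
  \sum_(u in S1) col u H = \sum_(u in S2) col u H -> S1 = S2.
Proof.
move=> h1 h2 hs.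
apply/eqP; apply/negPn/negP => Hne.
have [i Hi] : exists i, (i \in S1) != (i \in S2).
  apply/existsP; apply: contraNT Hne => /existsPn Hall.
  by apply/eqP/setP => j; move: (Hall j); rewrite negbK => /eqP.
pose v : 'cV['F_2]_np := \col_j (((j \in S1) != (j \in S2))%:R).
have Hv : H *m v = 0.
  apply/eqP; rewrite -subr_eq0 subr0; apply/eqP.
  have -> : H *m v = \sum_(u in S1) col u H - \sum_(u in S2) col u H.
    apply/matrixP => k l; rewrite !mxE summxE.
    rewrite (big_mkcond (fun u => u \in S1)) (big_mkcond (fun u => u \in S2)) /=.
    rewrite !summxE -sumrB; apply: eq_bigr => j _; rewrite !mxE.
    case: (j \in S1); case: (j \in S2); rewrite /= ?mxE ?mulr0 ?mulr1 ?subrr ?subr0 ?sub0r ?F2opp //.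
  by rewrite hs subrr.
have Hv0 : v != 0.
  apply/eqP => /matrixP /(_ i 0); rewrite !mxE; move: Hi.
  by case: (i \in S1); case: (i \in S2).
have Hwt := Hd.2 v Hv0 Hv.
have Hw1 : (wt v <= #|S1| + #|S2|)%N.
  apply: (leq_trans _ (leq_card_setU S1 S2)); apply: subset_leq_card.
  apply/subsetP => j; rewrite !inE mxE.
  by case: (j \in S1); case: (j \in S2).
have Hw2 : (0 < wt v)%N.
  rewrite /wt card_gt0; apply/set0Pn; exists i; rewrite inE mxE.
  by move: Hi; case: (i \in S1); case: (i \in S2).
have := odd_double_half (d - 1); rewrite -muln2.
move: Hwt Hw1 Hw2 h1 h2; set T := ((d - 1)./2)%N. lia.
Qed.

Lemma synd_dec_odd (d : nat) (Hd : min_dist H d) (m : 'I_np -> nat) :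
  (\sum_v m v <= (d - 1)./2)%N ->
  synd_dec H ((d - 1)./2) (cvec m) = [set v | odd (m v)].
Proof.
move=> hm.
have hS0 : (#|[set v | odd (m v)]| <= (d - 1)./2)%N.
  apply: leq_trans hm; rewrite card_odd; apply: leq_sum => v _.
  by case: (m v) => [|k] //=; case: (odd k).
rewrite /synd_dec; case: pickP => [S /andP[HS /eqP HSh] | Hnone] /=.
  apply: (synd_unique Hd HS hS0). by rewrite HSh cvec_odd.
by move: (Hnone [set v | odd (m v)]); rewrite hS0 cvec_odd eqxx.
Qed.


Lemma Phi_input_eq (a : R) (ha : a != 0) (m : 'I_np -> nat) (w : 'rV[R]_n) :
  Phi_input a (\sum_v (m v)%:R *: xsig H G a v + w) (\sum_v m v)%N
  = mod2v (binR R (\sum_v (m v)%:R *: cw H G v) + (2*a)^-1 *: w).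
Proof.
apply/matrixP => i j; rewrite /Phi_input /mod2v /binR !mxE !summxE.
rewrite (eq_bigr (fun k => (m k)%:R * xsig H G a k i j)); last by move=> k _; rewrite mxE.
rewrite [in RHS](eq_bigr (fun k => (m k)%:R * cw H G k i j)); last by move=> k _; rewrite mxE.
have -> : (2 * a)^-1 * (\sum_k (m k)%:R * xsig H G a k i j + w i j) + (\sum_v m v)%:R / 2
  = \sum_k (m k)%:R * bitR R (cw H G k i j) + (2 * a)^-1 * w i j.
  rewrite mulrDr addrAC; congr (_ + _).
  rewrite mulr_sumr natr_sum mulr_suml -big_split; apply: eq_bigr => k _ /=.
  rewrite /xsig mxE. field. done.
rewrite (sum_bit R m (fun v => cw H G v i j)) addrAC mod2_shift //.
Qed.
Lemma Phi_counts (a : R) (ha : 0 < a) (D : 'rV[R]_n -> option 'rV['F_2]_n)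
  (d : nat) (Hd : min_dist H d) (HG : row_free G) (z : 'rV[R]_n)
  (m : 'I_np -> nat) (k : nat) :
  (\sum_v m v <= (d-1)./2)%N ->
  (forall c, (c <= G)%MS ->
     Phi_input a (\sum_v (m v)%:R *: xsig H G a v + (2 ^+ k)^-1 *: z) (\sum_v m v)%N
       = mod2v (binR R c + (2 ^+ k)^-1 *: ((2*a)^-1 *: z)) ->
     D (Phi_input a (\sum_v (m v)%:R *: xsig H G a v + (2 ^+ k)^-1 *: z) (\sum_v m v)%N)
       = Some c) ->
  Phi H G a D ((d-1)./2) (\sum_v (m v)%:R *: xsig H G a v + (2 ^+ k)^-1 *: z) (\sum_v m v)%N
    = [set v | odd (m v)].
Proof.
move=> hm HE.
have ha0 : a != 0 by rewrite gt_eqF.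
have Hc : ((cvec m)^T *m G <= G)%MS by apply: submxMl.
have E : Phi_input a (\sum_v (m v)%:R *: xsig H G a v + (2 ^+ k)^-1 *: z) (\sum_v m v)%N
       = mod2v (binR R ((cvec m)^T *m G) + (2 ^+ k)^-1 *: ((2*a)^-1 *: z)).
  by rewrite Phi_input_eq // cvec_cw !scalerA mulrC.
rewrite /Phi (HE _ Hc E) /= mulmxKp // trmxK.
exact: synd_dec_odd.
Qed.

End Main.

Theorem corollary1 (R : realType) (mp np n : nat)
  (H : 'M['F_2]_(mp, np)) (d : nat) (Hd : min_dist H d)
  (G : 'M['F_2]_(mp, n)) (HG : row_free G)
  (a : R) (ha : 0 < a)
  (D : 'rV[R]_n -> option 'rV['F_2]_n)
  (HD : forall v c, D v = Some c -> (c <= G)%MS)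
  (User : finType) (A : {set User}) (u : User -> 'I_np) (z : 'rV[R]_n)
  (tau : nat)
  (Aell Bell : nat -> 'I_np -> {set User})
  (HA1 : forall v, Aell 1%N v = [set i in A | u i == v])
  (HB : forall l v, (1 <= l)%N ->
      Bell l v \subset Aell l v /\ #|Bell l v| = (2 * (#|Aell l v| ./2))%N)
  (HA : forall l v, (1 <= l)%N ->
      Aell l.+1 v \subset Bell l v /\ #|Aell l.+1 v| = (#|Bell l v| ./2)%N) :
  let T := ((d - 1) ./2)%N in
  let y := \sum_(i in A) xsig H G a (u i) + z in
  let ztil := (2 * a)^-1 *: z in
  (* no E_1 *)
  (#|A| <= T)%N ->
  (* the ICR run with estimate t_j = |A_j| terminates after tau iterations *)
  icr_stops H G a D T y #|A| tau ->
  (* no E_2 *)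
  (forall l, (1 <= l <= tau)%N ->
     forall (c : 'rV['F_2]_n) (k : nat), (c <= G)%MS ->
       Phi_input a (icr_y H G a D T y #|A| l) (icr_t H G a D T y #|A| l)
         = mod2v (binR R c + (2 ^+ k)^-1 *: ztil) ->
       D (Phi_input a (icr_y H G a D T y #|A| l) (icr_t H G a D T y #|A| l))
         = Some c) ->
  forall l, (1 <= l <= tau)%N ->
    u @: (\bigcup_(v : 'I_np) Aell l v)
      = \bigcup_(l <= l' < tau.+1) icr_L H G a D T y #|A| l'.
Proof.
move=> T y ztil hAT Hstop HE2 l hl.
pose m l v := #|Aell l v|.
have Hsub : forall l k, (1 <= l)%N -> forall v, Aell (l + k)%N v \subset Aell l v.
  move=> l0 k hl0 v; elim: k => [|k IH]; first by rewrite addn0.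
  have h0 : (1 <= l0 + k)%N by rewrite (leq_trans hl0) ?leq_addr.
  rewrite addnS; apply: subset_trans IH.
  exact: subset_trans (HA _ v h0).1 (HB _ v h0).1.
have HsubA : forall l l', (1 <= l <= l')%N -> forall v, Aell l' v \subset Aell l v.
  move=> l0 l' /andP[h0 h1] v; have := Hsub l0 (l' - l0)%N h0 v; by rewrite subnKC.
have Hhalf : forall l v, (1 <= l)%N -> m l.+1 v = (m l v)./2.
  move=> l0 v h0; by rewrite /m (HA l0 v h0).2 (HB l0 v h0).2 mul2n doubleK.
have Hm1 : #|A| = (\sum_v m 1%N v)%N.
  rewrite -sum1_card (partition_big u predT) //=; apply: eq_bigr => v _.
  by rewrite /m HA1 -sum1dep_card.
have Hsumle : forall l, (1 <= l)%N -> (\sum_v m l v <= #|A|)%N.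
  move=> l0 h0; rewrite Hm1; apply: leq_sum => v _; rewrite /m; apply: subset_leq_card.
  by apply: HsubA; rewrite leqnn h0.
have HLof : forall l, (1 <= l <= tau)%N ->
   icr_y H G a D T y #|A| l = \sum_v (m l v)%:R *: xsig H G a v + (2 ^+ l.-1)^-1 *: z ->
   icr_t H G a D T y #|A| l = (\sum_v m l v)%N ->
   icr_L H G a D T y #|A| l = [set v | odd (m l v)].
  move=> l0 hl0 Ey Et; rewrite /icr_L Ey Et.
  apply: (@Phi_counts R mp np n H G a ha D d Hd HG z (m l0) l0.-1).
    apply: leq_trans hAT; apply: Hsumle; by case/andP: hl0.
  move=> c Hc Heq; have := HE2 l0 hl0 c l0.-1 Hc; rewrite Ey Et; apply; exact: Heq.
have Inv : forall l, (1 <= l <= tau)%N ->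
   icr_y H G a D T y #|A| l = \sum_v (m l v)%:R *: xsig H G a v + (2 ^+ l.-1)^-1 *: z /\
   icr_t H G a D T y #|A| l = (\sum_v m l v)%N.
  elim=> [|[|l1] IH] hl1 //.
    split; last by rewrite -Hm1.
    rewrite expr0 invr1 scale1r /icr_y /= /y; congr (_ + _).
    rewrite (partition_big u predT) //=; apply: eq_bigr => v _.
    rewrite (eq_bigr (fun _ => xsig H G a v)); last by move=> i /andP[_ /eqP ->].
    rewrite (eq_bigl (fun i => i \in [set i in A | u i == v])); last by move=> i; rewrite inE.
    by rewrite sumr_const /m HA1 scaler_nat.
  have hl1' : (1 <= l1.+1 <= tau)%N by move: hl1 => /andP[_ h]; rewrite /= ltnW.
  have [Ey Et] := IH hl1'.
  have HL := HLof _ hl1' Ey Et.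
  have -> : icr_y H G a D T y #|A| l1.+2 = 2^-1 *: (icr_y H G a D T y #|A| l1.+1
      - \sum_(v in icr_L H G a D T y #|A| l1.+1) xsig H G a v) by [].
  have -> : icr_t H G a D T y #|A| l1.+2 = ((icr_t H G a D T y #|A| l1.+1
      - #|icr_L H G a D T y #|A| l1.+1|)./2)%N by [].
  rewrite Ey Et HL card_odd.
  have Eh : forall v, m l1.+2 v = (m l1.+1 v)./2 by move=> v; apply: Hhalf.
  split.
    have Eodd : \sum_(v in [set v | odd (m l1.+1 v)]) xsig H G a v
        = \sum_v (odd (m l1.+1 v))%:R *: xsig H G a v.
      rewrite big_mkcond /=; apply: eq_bigr => v _; rewrite inE.
      by case: (odd _); rewrite ?scale1r ?scale0r.
    rewrite Eodd addrAC -sumrB scalerDr scaler_sumr; congr (_ + _).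
      apply: eq_bigr => v _; rewrite Eh -scalerBl.
      rewrite -{1}(odd_double_half (m l1.+1 v)) natrD addrAC subrr add0r -muln2 natrM scalerA.
      congr (_ *: _); by field.
    by rewrite scalerA /= exprS invfM.
  have E2 : (\sum_v m l1.+1 v = \sum_v odd (m l1.+1 v) + (\sum_v (m l1.+1 v)./2).*2)%N.
    rewrite -muln2 big_distrl /= -big_split; apply: eq_bigr => v _.
    by rewrite /= muln2 odd_double_half.
  rewrite E2 addKn doubleK; apply: eq_bigr => v _; by rewrite Eh.
have HL : forall l, (1 <= l <= tau)%N -> icr_L H G a D T y #|A| l = [set v | odd (m l v)].
  move=> l0 hl0; have [Ey Et] := Inv l0 hl0; exact: HLof.
have htau1 : (1 <= tau)%N by case: Hstop.
have Htau : forall v, (m tau v <= 1)%N.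
  case: Hstop => _ _ h3.
  have htau : (1 <= tau <= tau)%N by rewrite htau1 leqnn.
  have [_ Et] := Inv tau htau.
  rewrite (HL tau htau) card_odd Et in h3.
  move=> v; apply: contraT; rewrite -ltnNge => hv.
  rewrite (bigD1 v) //= [X in _ = X](bigD1 v) //= in h3.
  have : (\sum_(i | i != v) odd (m tau i) <= \sum_(i | i != v) m tau i)%N.
    apply: leq_sum => i _; by case: (m tau i) => [|k] //=; case: (odd k).
  have := leq_b1 (odd (m tau v)). move=> h1 h2; move: h3 hv h1 h2. set S1 := (\sum_(i | i != v) odd (m tau i))%N. set S2 := (\sum_(i | i != v) m tau i)%N. set o := odd (m tau v). set M := m tau v. move=> /= e; move: e. lia.
have Key : forall k l, (1 <= l)%N -> (l + k)%N = tau -> forall v, (0 < m l v)%N ->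
    exists2 l', (l <= l' <= tau)%N & odd (m l' v).
  elim=> [|k IH] l0 h0 hk v hv.
    rewrite addn0 in hk; subst l0.
    exists tau; first by rewrite !leqnn.
    have := Htau v; move: hv; by case: (m tau v) => [|[|]].
  case ho: (odd (m l0 v)).
    by exists l0 => //; rewrite leqnn /= -hk leq_addr.
  have h1 : (0 < m l0.+1 v)%N.
    rewrite Hhalf //; have := odd_double_half (m l0 v); rewrite ho -muln2 /=. lia.
  have hk' : (l0.+1 + k)%N = tau by rewrite -hk addSnnS.
  have [l' hl' ho'] := IH l0.+1 (ltn0Sn l0) hk' v h1.
  exists l' => //; move: hl' => /andP[h2 h3]; by rewrite h3 ltnW.
have HA1sub : forall l v i, (1 <= l)%N -> i \in Aell l v -> u i = v.
  move=> l0 v i h0 hi.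
  have : i \in Aell 1%N v by apply: (subsetP (HsubA 1%N l0 _ v)) => //; rewrite h0.
  by rewrite HA1 inE => /andP[_ /eqP].
case/andP: hl => hl1 hl2.
apply/setP => x; rewrite mem_bigcup_seq; apply/idP/idP.
  case/imsetP => i /bigcupP [v _ hi] ->.
  have ev := HA1sub _ _ _ hl1 hi; rewrite ev.
  have hv : (0 < m l v)%N by rewrite /m card_gt0; apply/set0Pn; exists i.
  have [l' hl' ho] := Key (tau - l)%N l hl1 (subnKC hl2) v hv.
  apply/hasP; exists l'; first by rewrite mem_index_iota ltnS.
  rewrite HL ?inE //; move: hl' => /andP[h2 ->]; by rewrite (leq_trans hl1 h2).
case/hasP => l' hl'; rewrite mem_index_iota ltnS in hl'.
have hl'' : (1 <= l' <= tau)%N by move: hl' => /andP[h2 ->]; rewrite (leq_trans hl1 h2).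
rewrite HL // inE => ho.
have : (0 < m l' x)%N by move: ho; case: (m l' x).
rewrite /m card_gt0 => /set0Pn [i hi].
have hi' : i \in Aell l x by apply: (subsetP (HsubA l l' _ x)) => //; rewrite hl1; case/andP: hl'.
apply/imsetP; exists i; last by rewrite (HA1sub _ _ _ hl1 hi').
by apply/bigcupP; exists x.
Qed.
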